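(* Let $f(x)=x^5+px^4+qx^3+rx^2+sx+t$ with real coefficients and let $D$, $L_1$, $L_2$, $L_3$ be as in the context. Then $f$ has a quintuple root (i.e. $f(x)=(x-a)^5$ for some $a$) if and only if $D=0$, $L_1=0$, $L_2=0$ and $L_3=0$.
   Context: Let $\alpha_1,\dots,\alpha_5\in\mathbb{C}$ be the roots of $f$ listed with multiplicity. $D=\prod_{1\le i<j\le 5}(\alpha_i-\alpha_j)^2$ is the discriminant of $f$. $L_3=2p^2-5q$. $L_2=40qs-16p^2s-8rp^3+38rpq+3p^2q^2-12q^3-45r^2$. $L_1=-264ps^2r-12p^3tq^2+36r^3pq-124srpq^2+28srp^3q+260sptq-132p^2qrt+240pr^2t+234sqr^2+32p^4tr+48ptq^3-56sp^3t-80q^2rt+194qs^2p^2-600str-6q^3sp^2+2p^2q^2r^2-12sr^2p^2-54r^4+320s^3-8q^3r^2-8r^3p^3+250qt^2-176q^2s^2+24q^4s-36p^4s^2-100p^2t^2$. *)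

(* Defs.v *)
From HB Require Import structures.
From mathcomp Require Import all_boot all_order all_algebra.
Set Implicit Arguments. Unset Strict Implicit. Unset Printing Implicit Defensive.
Import Order.TTheory GRing.Theory Num.Theory.
Local Open Scope ring_scope.

Section Quintic.
Variable C : numClosedFieldType.
Variables p q r s t : C.

Definition quintic : {poly C} :=
  'X^5 + p%:P * 'X^4 + q%:P * 'X^3 + r%:P * 'X^2 + s%:P * 'X + t%:P.

(* discriminant from a listing of the 5 roots with multiplicity *)
Definition discr5 (a : 'I_5 -> C) : C :=
  \prod_(i < 5) \prod_(j < 5 | (i < j)%N) (a i - a j) ^+ 2.

Definition L3 : C := 2 * p ^+ 2 - 5 * q.

Definition L2 : C :=
  40 * q * s - 16 * p ^+ 2 * s - 8 * r * p ^+ 3 + 38 * r * p * q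
  + 3 * p ^+ 2 * q ^+ 2 - 12 * q ^+ 3 - 45 * r ^+ 2.

Definition L1 : C :=
  - 264 * p * s ^+ 2 * r - 12 * p ^+ 3 * t * q ^+ 2 + 36 * r ^+ 3 * p * q
  - 124 * s * r * p * q ^+ 2 + 28 * s * r * p ^+ 3 * q + 260 * s * p * t * q
  - 132 * p ^+ 2 * q * r * t + 240 * p * r ^+ 2 * t + 234 * s * q * r ^+ 2
  + 32 * p ^+ 4 * t * r + 48 * p * t * q ^+ 3 - 56 * s * p ^+ 3 * t
  - 80 * q ^+ 2 * r * t + 194 * q * s ^+ 2 * p ^+ 2 - 600 * s * t * r
  - 6 * q ^+ 3 * s * p ^+ 2 + 2 * p ^+ 2 * q ^+ 2 * r ^+ 2
  - 12 * s * r ^+ 2 * p ^+ 2 - 54 * r ^+ 4 + 320 * s ^+ 3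
  - 8 * q ^+ 3 * r ^+ 2 - 8 * r ^+ 3 * p ^+ 3 + 250 * q * t ^+ 2
  - 176 * q ^+ 2 * s ^+ 2 + 24 * q ^+ 4 * s - 36 * p ^+ 4 * s ^+ 2
  - 100 * p ^+ 2 * t ^+ 2.
End Quintic.

(* Main.v *)
Require Import Defs.
From HB Require Import structures.
From mathcomp Require Import all_boot all_order all_algebra.
From mathcomp Require Import ring.
Import Order.TTheory GRing.Theory Num.Theory.
Local Open Scope ring_scope.

Lemma quintic_shift (C : numClosedFieldType) (b q r s t : C) :
  quintic (-5 * b) q r s t =
  ('X - b%:P) ^+ 5
  + (10 * b ^+ 2 + 4 * (-5 * b) * b + q)%:P * ('X - b%:P) ^+ 3
  + (10 * b ^+ 3 + 6 * (-5 * b) * b ^+ 2 + 3 * q * b + r)%:P * ('X - b%:P) ^+ 2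
  + (5 * b ^+ 4 + 4 * (-5 * b) * b ^+ 3 + 3 * q * b ^+ 2 + 2 * r * b + s)%:P * ('X - b%:P)
  + (b ^+ 5 + (-5 * b) * b ^+ 4 + q * b ^+ 3 + r * b ^+ 2 + s * b + t)%:P.
Proof.
rewrite /quintic !(rmorphD, rmorphM, rmorphN, rmorphXn, rmorph_nat).
set B := b%:P. ring.
Qed.

Lemma quintic_coef (C : numClosedFieldType) (p q r s t p' q' r' s' t' : C) :
  quintic p q r s t = quintic p' q' r' s' t' ->
  [/\ p = p', q = q', r = r', s = s' & t = t'].
Proof.
move=> H.
have c k := congr1 (fun P : {poly C} => P`_k) H.
move: (c 4%N) (c 3%N) (c 2%N) (c 1%N) (c 0%N).
rewrite /quintic !coefE /=.
rewrite !(mulr0, mulr1, addr0, add0r) => h1 h2 h3 h4 h5. by split.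
Qed.

Lemma L3_shift (C : numClosedFieldType) (b q : C) :
  L3 (-5 * b) q = -5 * (10 * b ^+ 2 + 4 * (-5 * b) * b + q).
Proof. rewrite /L3. ring. Qed.

Lemma L2_shift (C : numClosedFieldType) (b q r s : C) :
  let q1 := 10 * b ^+ 2 + 4 * (-5 * b) * b + q in
  let r1 := 10 * b ^+ 3 + 6 * (-5 * b) * b ^+ 2 + 3 * q * b + r in
  let s1 := 5 * b ^+ 4 + 4 * (-5 * b) * b ^+ 3 + 3 * q * b ^+ 2 + 2 * r * b + s in
  L2 (-5 * b) q r s = 40 * q1 * s1 - 12 * q1 ^+ 3 - 45 * r1 ^+ 2.
Proof. rewrite /L2 /=. ring. Qed.

Lemma L1_shift (C : numClosedFieldType) (b q r s t : C) :
  let q1 := 10 * b ^+ 2 + 4 * (-5 * b) * b + q in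
  let r1 := 10 * b ^+ 3 + 6 * (-5 * b) * b ^+ 2 + 3 * q * b + r in
  let s1 := 5 * b ^+ 4 + 4 * (-5 * b) * b ^+ 3 + 3 * q * b ^+ 2 + 2 * r * b + s in
  let t1 := b ^+ 5 + (-5 * b) * b ^+ 4 + q * b ^+ 3 + r * b ^+ 2 + s * b + t in
  L1 (-5 * b) q r s t = L1 0 q1 r1 s1 t1.
Proof. rewrite /L1 /=. ring. Qed.

Lemma L1_00 (C : numClosedFieldType) (s t : C) : L1 0 0 0 s t = 320 * s ^+ 3.
Proof. rewrite /L1. ring. Qed.

Lemma nat_neq0 (C : numClosedFieldType) (n : nat) : (n.+1%:R : C) != 0.
Proof. by rewrite pnatr_eq0. Qed.

Lemma expand5 (C : numClosedFieldType) (b : C) :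
  ('X - b%:P) ^+ 5 = quintic (-5 * b) (10 * b ^+ 2) (- 10 * b ^+ 3) (5 * b ^+ 4) (- b ^+ 5).
Proof.
rewrite /quintic !(rmorphD, rmorphM, rmorphN, rmorphXn, rmorph_nat).
set B := b%:P. ring.
Qed.

Lemma aux (C : numClosedFieldType) (q1 r1 s1 t1 : C) :
  -5 * q1 = 0 -> 40 * q1 * s1 - 12 * q1 ^+ 3 - 45 * r1 ^+ 2 = 0 ->
  L1 0 q1 r1 s1 t1 = 0 -> q1 = 0 /\ r1 = 0 /\ s1 = 0.
Proof.
move=> h3 h2 h1.
have q0 : q1 = 0.
  move/eqP: h3; rewrite mulf_eq0 oppr_eq0 (negbTE (nat_neq0 C 4)) /=.
  by move/eqP.
rewrite q0 expr0n /= !(mulr0, subr0, mul0r, sub0r) in h2.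
have r0 : r1 = 0.
  move/eqP: h2; rewrite oppr0 sub0r oppr_eq0 mulf_eq0 (negbTE (nat_neq0 C 44)) /=.
  by rewrite expf_eq0 /= => /eqP.
rewrite q0 r0 L1_00 in h1.
have s0 : s1 = 0.
  move/eqP: h1; rewrite mulf_eq0 (negbTE (nat_neq0 C 319)) /=.
  by rewrite expf_eq0 /= => /eqP.
by [].
Qed.

Theorem mainTheorem5 (C : numClosedFieldType) (p q r s t : C)
  (hp : p \is Num.real) (hq : q \is Num.real) (hr : r \is Num.real)
  (hs : s \is Num.real) (ht : t \is Num.real)
  (a : 'I_5 -> C)
  (ha : quintic p q r s t = \prod_(i < 5) ('X - (a i)%:P)) :
  (exists b : C, quintic p q r s t = ('X - b%:P) ^+ 5) <->
  [/\ discr5 a = 0, L1 p q r s t = 0, L2 p q r s = 0 & L3 p q = 0].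
Proof.
split.
- move=> [b hb].
  have [-> -> -> -> ->] := @quintic_coef C _ _ _ _ _ _ _ _ _ _ (etrans hb (expand5 C b)).
  have ab : forall i, a i = b.
    move=> i.
    have : (('X - b%:P) ^+ 5).[a i] = 0.
      rewrite -hb ha horner_prod; apply/eqP/prodf_eq0.
      by exists i => //; rewrite !hornerE subrr.
    by rewrite !hornerE => /eqP; rewrite expf_eq0 /= subr_eq0 => /eqP.
  split.
  + rewrite /discr5 big_ord_recl (bigD1 (1 : 'I_5)) //= !ab subrr expr0n /=.
    by rewrite !mul0r.
  + rewrite /L1; ring.
  + rewrite /L2; ring.
  + rewrite /L3; ring.
- move=> [hD h1 h2 h3].
  have [b pb] : exists b, p = -5 * b.
    by exists (- p / 5); field.
  subst p.
  move: h1 h2 h3; rewrite L1_shift L2_shift L3_shift /=.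
  move=> h1 h2 h3.
  have [q0 [r0 s0]] := aux C _ _ _ _ h3 h2 h1.
  have hf := quintic_shift C b q r s t.
  rewrite q0 r0 s0 !mul0r !addr0 in hf.
  set t1 := (X in _ + X%:P) in hf.
  exists b; rewrite hf.
  suff -> : t1 = 0 by rewrite addr0.
  move/eqP: hD; rewrite /discr5 => /prodf_eq0 [i _ /prodf_eq0 [j ij]].
  rewrite expf_eq0 /= subr_eq0 => /eqP aij.
  have jni : j != i by rewrite neq_ltn ij orbT.
  set c := a i.
  have [g hg] : exists g, \prod_(k < 5) ('X - (a k)%:P) = ('X - c%:P) ^+ 2 * g.
    rewrite (bigD1 i) //= (bigD1 j) //= -aij.
    by eexists; rewrite mulrA expr2.
  have hd := congr1 (fun P : {poly C} => (P^`()).[c]) (etrans (esym hf) (etrans ha hg)).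
  move: hd; rewrite /= derivD derivC addr0 deriv_exp derivXsubC mul1r derivM deriv_exp derivXsubC.
  rewrite !hornerE subrr /= !(expr0n, mul0r, mulr0n, add0r, mulr0, addr0) /=.
  rewrite subrr mul0r => hh. have : (c - b) ^+ 4 * 5 = 0 by rewrite -hh; ring.
  move/eqP; rewrite mulf_eq0 (negbTE (nat_neq0 C 4)) orbF expf_eq0 /= subr_eq0 => /eqP cb.
  have := congr1 (fun P : {poly C} => P.[c]) (etrans (esym hf) (etrans ha hg)).
  rewrite /= !hornerE cb subrr !(expr0n, mul0r, add0r) /=.
  move=> h; rewrite /t1 -[RHS]h; ring.
Qed.
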